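(* Let $D$ be a total clone on $\{0,1\}$ with $D \subseteq T_{0,2}$. Then $\mathcal{I}_{\mathrm{str}}(D)$ has the cardinality of the continuum.
   Context: Let $\mathbf{2}=\{0,1\}$. A partial function of arity $n$ on $\mathbf{2}$ is a map $f:\operatorname{dom} f\to\mathbf{2}$ with $\operatorname{dom} f\subseteq \mathbf{2}^n$; it is total if $\operatorname{dom} f=\mathbf{2}^n$. $P_{\mathbf{2}}$ is the set of all partial functions, $O_{\mathbf{2}}$ the set of total ones. Composition $F=f(g_1,\dots,g_n)$ is given by $F(\mathbf{x})=f(g_1(\mathbf{x}),\dots,g_n(\mathbf{x}))$ on $\operatorname{dom} F=\{\mathbf{x}\in\bigcap_i\operatorname{dom} g_i : (g_1(\mathbf{x}),\dots,g_n(\mathbf{x}))\in\operatorname{dom} f\}$. A partial clone is a composition-closed subset of $P_{\mathbf{2}}$ containing all projections; a total clone is one contained in $O_{\mathbf{2}}$. A partial clone $X$ is strong if it contains every restriction of each of its members. For a total clone $C$, $\mathcal{I}_{\mathrm{str}}(C)$ is the set of all strong partial clones $X$ with $X\cap O_{\mathbf{2}}=C$. A total $n$-ary $f$ preserves a binary relation $\rho$ if for all $(a_1,b_1),\dots,(a_n,b_n)\in\rho$ we have $(f(a_1,\dots,a_n),f(b_1,\dots,b_n))\in\rho$. $T_{0,2}$ is the clone of all total Boolean functions preserving $\rho_{0,2}=\{(0,0),(0,1),(1,0)\}$. *)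

(* Defs.v *)
From mathcomp Require Import all_boot.
Set Implicit Arguments. Unset Strict Implicit. Unset Printing Implicit Defensive.

(* A partial Boolean function of arity n: a map from 2^n to option bool;
   [f x = None] means x is outside dom f. *)
Definition PF (n : nat) := {ffun n.-tuple bool -> option bool}.

(* Families of partial functions, indexed by arity; component [n] holds
   the functions of arity [n.+1] (arities are >= 1, as usual in clone theory). *)
Definition Family := forall n : nat, {set PF n.+1}.

Definition proj (n : nat) (i : 'I_n) : PF n := [ffun x => Some (tnth x i)].

Definition comp (k m : nat) (f : PF k) (gs : k.-tuple (PF m)) : PF m :=
  [ffun x => if [forall i : 'I_k, tnth gs i x != None]
             then f [tuple odflt false (tnth gs i x) | i < k]
             else None].

Definition total (n : nat) (f : PF n) : Prop := forall x, f x <> None.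

Definition restriction (n : nat) (g f : PF n) : Prop :=
  forall x, g x <> None -> g x = f x.

Definition partial_clone (X : Family) : Prop :=
  (forall n (i : 'I_n.+1), proj i \in X n) /\
  (forall k m (f : PF k.+1) (gs : k.+1.-tuple (PF m.+1)),
      f \in X k -> (forall i, tnth gs i \in X m) -> comp f gs \in X m).

Definition total_clone (C : Family) : Prop :=
  partial_clone C /\ (forall n f, f \in C n -> total f).

Definition strong (X : Family) : Prop :=
  forall n (f g : PF n.+1), f \in X n -> restriction g f -> g \in X n.

Definition Istr (C : Family) (X : Family) : Prop :=
  partial_clone X /\ strong X /\
  (forall n (f : PF n.+1), (f \in X n /\ total f) <-> f \in C n).

Definition rho02 (a b : bool) : bool := ~~ (a && b).

Definition preserves_rho02 (n : nat) (f : PF n) : Prop :=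
  forall a b : n.-tuple bool,
    (forall i, rho02 (tnth a i) (tnth b i)) ->
    rho02 (odflt false (f a)) (odflt false (f b)).

Definition in_T02 (n : nat) (f : PF n) : Prop := total f /\ preserves_rho02 f.

Definition card_continuum (P : Family -> Prop) : Prop :=
  exists F : (nat -> bool) -> Family,
    injective F /\ (forall s, P (F s)) /\ (forall X, P X -> exists s, F s = X).

(* Main.v *)
Require Import Defs.
From mathcomp Require Import all_boot zify.
From Stdlib Require Import Classical ClassicalEpsilon FunctionalExtensionality.
Set Implicit Arguments. Unset Strict Implicit. Unset Printing Implicit Defensive.

Definition Lk (k : nat) := 2 * k + 3.
Definition Nk (k : nat) := 3 * k + 5.
Definition tk (k : nat) := k.+1.
Definition inC k v := (v == 0) || (Lk k <= v).
Definition Eg k u v : bool :=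
  ((u.+1 == v) || (v.+1 == u)) && (u <= Lk k) && (v <= Lk k)
  || inC k u && inC k v && (u != v).
Definition dl k v := if inC k v then 0 else minn v (Lk k - v).

Lemma Eg_sym k u v : Eg k u v = Eg k v u.
Proof. rewrite /Eg /inC /Lk. apply/idP/idP => ?; lia. Qed.

Lemma Eg_irr k u : Eg k u u = false.
Proof. rewrite /Eg /inC /Lk. apply/negbTE/negP => ?; lia. Qed.

Lemma dl_lip k u v : Eg k u v -> dl k u <= (dl k v).+1.
Proof. rewrite /Eg /dl /inC /Lk. by case: ifP; case: ifP => ? ? ?; lia. Qed.

Lemma tri k a b c : Eg k a b -> Eg k b c -> Eg k a c -> inC k a.
Proof. rewrite /Eg /inC /Lk => ? ? ?; lia. Qed.

Definition ghom k m (p : nat -> nat) :=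
  (forall u, u < Nk k -> p u < Nk m) /\
  (forall u v, u < Nk k -> v < Nk k -> Eg k u v -> Eg m (p u) (p v)).

Lemma hom_C k m p v : ghom k m p -> v < Nk k -> inC k v -> inC m (p v).
Proof.
move=> [hb he] hv hc.
have hL : Lk k + 1 < Nk k by rewrite /Lk /Nk; lia.
have [a [b [ha [hb' [h1 [h2 h3]]]]]] : exists a b, a < Nk k /\ b < Nk k /\
   Eg k v a /\ Eg k a b /\ Eg k v b.
  move: hc hv; rewrite /Eg /inC /Nk /Lk => hc hv.
  case: (v =P 0) => [->|v0].
    by exists (2 * k + 3), (2 * k + 3).+1; lia.
  case: (v =P 2 * k + 3) => [->|vL].
    by exists 0, (2 * k + 3).+1; lia.
  by exists 0, (2 * k + 3); lia.
apply: (tri (b := p a) (c := p b)); apply: he => //.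
Qed.

Lemma hom_big k m p : m < k -> ghom k m p -> False.
Proof.
move=> lt hp; have [hb he] := hp.
pose dec (i : nat) := if i == 0 then 0 else Lk k + i - 1.
pose enc (v : nat) := if v == 0 then 0 else v - Lk m + 1.
have decN i : i < k + 3 -> dec i < Nk k by rewrite /dec /Nk /Lk; case: ifP; lia.
have decC i : i < k + 3 -> inC k (dec i) by rewrite /dec /inC /Nk /Lk; case: ifP; lia.
have encB v : v < Nk m -> inC m v -> enc v < m + 3.
  by rewrite /enc /inC /Nk /Lk; case: ifP; lia.
pose F (i : 'I_(k + 3)) : 'I_(m + 3) :=
  Ordinal (encB _ (hb _ (decN _ (ltn_ord i))) (hom_C hp (decN _ (ltn_ord i)) (decC _ (ltn_ord i)))).
have : injective F.
  move=> i j /(congr1 val) /=.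
  have hi := ltn_ord i; have hj := ltn_ord j.
  case: (i =P j) => [-> //|nij].
  have nij' : (i : nat) != j by apply/eqP => /val_inj.
  have E1 : Eg k (dec i) (dec j).
    move: (decC _ hi) (decC _ hj); rewrite /Eg /dec /inC /Lk; do 2 case: ifP; lia.
  have E2 := he _ _ (decN _ hi) (decN _ hj) E1.
  have C1 := hom_C hp (decN _ hi) (decC _ hi).
  have C2 := hom_C hp (decN _ hj) (decC _ hj).
  have B1 := hb _ (decN _ hi); have B2 := hb _ (decN _ hj).
  move: E2 C1 C2 B1 B2; rewrite /enc /Eg /inC /Nk /Lk.
  move: (p (dec i)) (p (dec j)) => a b; do 2 case: ifP; lia.
move/leq_card; rewrite !card_ord; lia.
Qed.

Lemma hom_small k m p u v : k < m -> ghom k m p -> u < Nk k -> v < Nk k -> Eg k u v ->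
  (p u == tk m) || (p u == (tk m).+1) -> (p v == tk m) || (p v == (tk m).+1) -> False.
Proof.
move=> lt hp hu hv huv hpu hpv; have [hb he] := hp.
have LN : Lk k < Nk k by rewrite /Lk /Nk; lia.
have e1 i : i <= Lk k -> dl m (p i) <= i.
  elim: i => [_|i IH hi].
    have := hom_C hp (_ : 0 < Nk k) (_ : inC k 0).
    rewrite /dl => ->; [by []| rewrite /Nk; lia | by []].
  have E : Eg k i i.+1 by rewrite /Eg; lia.
  have := dl_lip (he _ _ (_ : i.+1 < Nk k) (_ : i < Nk k) (_ : Eg k i.+1 i)).
  move=> H; have := H (ltac:(lia)) (ltac:(lia)) (ltac:(by rewrite Eg_sym)).
  have := IH (ltac:(lia)); lia.
have e2 i : i <= Lk k -> dl m (p (Lk k - i)) <= i.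
  elim: i => [_|i IH hi].
    have := hom_C hp LN (_ : inC k (Lk k)).
    rewrite subn0 /dl => ->; [by []| by rewrite /inC leqnn orbT].
  have E : Eg k (Lk k - i.+1) (Lk k - i) by rewrite /Eg; lia.
  have := dl_lip (he _ _ (_ : Lk k - i.+1 < Nk k) (_ : Lk k - i < Nk k) E).
  move=> H; have := H (ltac:(lia)) (ltac:(lia)).
  have := IH (ltac:(lia)); lia.
have dt w : (w == tk m) || (w == (tk m).+1) -> dl m w = tk m.
  by rewrite /dl /inC /tk /Lk; case: ifP; lia.
have du := dt _ hpu; have dv := dt _ hpv.
move: huv; rewrite {1}/Eg => /orP [hpath|hcl].
  have [i [ei fi]] : exists i, i < Lk k /\ ((u == i) && (v == i.+1) || (v == i) && (u == i.+1)).
    case/andP: hpath => /andP [/orP [h|h] h1] h2.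
      by exists u; move: h h1 h2; lia.
    by exists v; move: h h1 h2; lia.
  have a1 := e1 i (ltac:(lia)); have a2 := e2 (Lk k - i.+1) (ltac:(lia)).
  have b2 : Lk k - (Lk k - i.+1) = i.+1 by lia.
  rewrite b2 in a2.
  move: fi du dv a1 a2 lt; rewrite /tk /Lk.
  by case/orP => /andP [/eqP -> /eqP ->]; lia.
case/andP: hcl => /andP [cu _] _.
have := hom_C hp hu cu; move: hpu; rewrite /inC /tk /Lk; lia.
Qed.

Definition z0 n : n.-tuple bool := [tuple false | i < n].

Lemma T02_z0 n (d : PF n) : in_T02 d -> d (z0 n) = Some false.
Proof.
case=> ht hp; have := hp (z0 n) (z0 n) (fun i => ltac:(by rewrite /rho02 tnth_mktuple)).
rewrite /rho02.
by case E: (d (z0 n)) => [[]|] //; have := ht (z0 n).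
Qed.

Lemma comp_def k m (f : PF k) (gs : k.-tuple (PF m)) (x : m.-tuple bool) :
  Defs.comp f gs x <> None -> forall i, tnth gs i x <> None.
Proof.
rewrite /Defs.comp ffunE; case: ifP => // /forallP h _ i; exact/eqP/h.
Qed.

Lemma comp_val k m (f : PF k) (gs : k.-tuple (PF m)) (x : m.-tuple bool) :
  Defs.comp f gs x <> None -> Defs.comp f gs x = f [tuple odflt false (tnth gs i x) | i < k].
Proof. by rewrite /Defs.comp ffunE; case: ifP. Qed.

Lemma comp_val2 k m (f : PF k) (gs : k.-tuple (PF m)) (x : m.-tuple bool) :
  (forall i, tnth gs i x <> None) -> Defs.comp f gs x = f [tuple odflt false (tnth gs i x) | i < k].
Proof.
move=> h; rewrite /Defs.comp ffunE; case: ifP => // /negP []; apply/forallP=> i; exact/eqP/h.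
Qed.

Definition pres k n (f : PF n) : Prop :=
  forall X : 'I_(Nk k) -> n.-tuple bool,
   (forall u v : 'I_(Nk k), Eg k u v -> forall j, ~~ (tnth (X u) j && tnth (X v) j)) ->
   (forall v, f (X v) <> None) ->
   forall u v : 'I_(Nk k), Eg k u v -> ~~ (odflt false (f (X u)) && odflt false (f (X v))).

Lemma pres_restr k n (f g : PF n) : restriction g f -> pres k f -> pres k g.
Proof.
move=> hr hp X hX hd u v e.
have eq w : g (X w) = f (X w) by apply: hr; apply: hd.
rewrite !eq; apply: hp => // w; rewrite -eq; exact: hd.
Qed.

Lemma pres_T02 k n (d : PF n) : in_T02 d -> pres k d.
Proof.
case=> _ hp X hX _ u v e; apply: hp => i; exact: hX.
Qed.

Lemma pres_comp k a m (f : PF a) (gs : a.-tuple (PF m)) :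
  pres k f -> (forall i, pres k (tnth gs i)) -> pres k (Defs.comp f gs).
Proof.
move=> hf hg X hX hd u v e.
have hd' w i : tnth gs i (X w) <> None by apply: comp_def (hd w) i.
pose Y w := [tuple odflt false (tnth gs i (X w)) | i < a].
have eY w : Defs.comp f gs (X w) = f (Y w) by apply: comp_val2.
rewrite !eY; apply: hf => //.
  move=> x y exy j; rewrite !tnth_mktuple; apply: hg => // w; exact: hd'.
by move=> w; rewrite -eY.
Qed.

Definition restrb n (g f : PF n) : bool := [forall x, (g x != None) ==> (g x == f x)].
Lemma restrbP n (g f : PF n) : reflect (restriction g f) (restrb g f).
Proof.
apply: (iffP forallP) => h x.
  by move=> hx; have /implyP := h x; move/(_ (introN eqP hx)) => /eqP.
by apply/implyP => /eqP hx; apply/eqP; apply: h.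
Qed.

Definition inR (D : Family) n (f : PF n.+1) : bool := [exists d in D n, restrb f d].
Lemma inRP (D : Family) n (f : PF n.+1) :
  reflect (exists2 d, d \in D n & restriction f d) (inR D f).
Proof.
apply: (iffP existsP) => [[d /andP [hd /restrbP hr]]|[d hd hr]]; first by exists d.
by exists d; rewrite hd; apply/restrbP.
Qed.

Definition bP (P : Prop) : bool := if excluded_middle_informative P then true else false.
Lemma bPP P : reflect P (bP P).
Proof. by rewrite /bP; case: excluded_middle_informative => h; constructor. Qed.

Definition Yp (S : nat -> bool) n (f : PF n) : Prop :=
  f (z0 n) = None /\ forall k, S k = false -> pres k f.

Definition XS (D : Family) (S : nat -> bool) : Family :=
  fun n => [set f : PF n.+1 | inR D f || bP (Yp S f)].

Lemma XSP D S n (f : PF n.+1) :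
  f \in XS D S n <-> (exists2 d, d \in D n & restriction f d) \/ Yp S f.
Proof.
rewrite /XS inE; split.
  by case/orP => [/inRP|/bPP]; [left|right].
by case=> [/inRP -> | /bPP ->]; rewrite ?orbT.
Qed.

Lemma restr_trans n (f g h : PF n) : restriction f g -> restriction g h -> restriction f h.
Proof. move=> h1 h2 x hx; rewrite h1 // h2 // -h1 //. Qed.

Lemma restr_refl n (f : PF n) : restriction f f.
Proof. by []. Qed.

Section XSproof.
Variables (D : Family) (S : nat -> bool).
Hypothesis hD : total_clone D.
Hypothesis hT : forall n (f : PF n.+1), f \in D n -> in_T02 f.

Lemma XS_pres n (f : PF n.+1) k : f \in XS D S n -> S k = false -> pres k f.
Proof.
case/XSP => [[d hd hr]|[_ hp]] hk; last exact: hp.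
apply: pres_restr hr _; apply: pres_T02; exact: hT.
Qed.

Lemma XS_comp k m (f : PF k.+1) (gs : k.+1.-tuple (PF m.+1)) :
  f \in XS D S k -> (forall i, tnth gs i \in XS D S m) -> Defs.comp f gs \in XS D S m.
Proof.
move=> hf hg.
case: (boolP (inR D f && [forall i, inR D (tnth gs i)])) => [/andP [/inRP [d hd hr] /forallP hgs]| hB].
  have hgs' i : exists d, d \in D m /\ restriction (tnth gs i) d.
    by case/inRP: (hgs i) => d' ? ?; exists d'.
  pose dd i := proj1_sig (constructive_indefinite_description _ (hgs' i)).
  have ddP i : dd i \in D m /\ restriction (tnth gs i) (dd i).
    exact: (proj2_sig (constructive_indefinite_description _ (hgs' i))).
  pose ds := [tuple dd i | i < k.+1].
  apply/XSP; left; exists (Defs.comp d ds).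
    apply: (proj2 hD.1) => // i; rewrite tnth_mktuple; exact: (ddP i).1.
  move=> x hx.
  have hgi i : tnth gs i x <> None by apply: comp_def hx i.
  have egi i : tnth gs i x = dd i x by apply: (ddP i).2; apply: hgi.
  rewrite comp_val //.
  have et : [tuple odflt false (tnth gs i x) | i < k.+1] = [tuple odflt false (tnth ds i x) | i < k.+1].
    by apply: eq_mktuple => i; rewrite tnth_mktuple egi.
  rewrite et comp_val2; last first.
    move=> i; rewrite tnth_mktuple; exact: (proj2 hD _ _ (ddP i).1 x).
  apply: hr; rewrite -et -comp_val //.
apply/XSP; right; split; last first.
  move=> k' hk; apply: pres_comp; first exact: XS_pres hf hk.
  move=> i; exact: XS_pres (hg i) hk.
case E: (Defs.comp f gs (z0 m.+1)) => [b|] //.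
have hne : Defs.comp f gs (z0 m.+1) <> None by rewrite E.
have hgi i : tnth gs i (z0 m.+1) <> None by apply: comp_def hne i.
have gR i : inR D (tnth gs i) /\ tnth gs i (z0 m.+1) = Some false.
  case/XSP: (hg i) => [[d hd hr]|[hz _]]; last by have := hgi i; rewrite hz.
  split; first by apply/inRP; exists d.
  rewrite hr //; apply: T02_z0; exact: hT.
have fY : Yp S f.
  case/XSP: hf => [[d hd hr]|//].
  move: hB; rewrite negb_and => /orP [/negP []|/negP []]; first by apply/inRP; exists d.
  by apply/forallP => i; case: (gR i).
have et : [tuple odflt false (tnth gs i (z0 m.+1)) | i < k.+1] = z0 k.+1.
  by apply: eq_from_tnth => i; rewrite !tnth_mktuple (gR i).2.
by move: E; rewrite comp_val // et fY.1.
Qed.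

Lemma XS_Istr : Istr D (XS D S).
Proof.
split; [split|split].
- move=> n i; apply/XSP; left; exists (proj i) => //; exact: hD.1.1.
- exact: XS_comp.
- move=> n f g /XSP [[d hd hr]|[hz hp]] hgf; apply/XSP.
    by left; exists d => //; apply: restr_trans hgf hr.
  right; split; last by move=> k hk; apply: pres_restr hgf (hp k hk).
  by case E: (g (z0 n.+1)) => [b|] //; rewrite -E hgf // E.
- move=> n f; split.
    case=> /XSP [[d hd hr]|[hz _]] ht; last by have := ht (z0 n.+1).
    suff -> : f = d by [].
    by apply/ffunP => x; apply: hr; apply: ht.
  move=> hf; split; last exact: hD.2 hf.
  by apply/XSP; left; exists f.
Qed.
End XSproof.

Definition NN m := Nk m * Nk m.
Definition rowv m (v : nat) : (NN m).+1.-tuple bool :=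
  [tuple ((v == i %/ Nk m) || (v == i %% Nk m)) && ~~ Eg m (i %/ Nk m) (i %% Nk m) | i < (NN m).+1].
Definition hm m : PF (NN m).+1 :=
  [ffun x => if [exists v : 'I_(Nk m), x == rowv m v]
             then Some ((x == rowv m (tk m)) || (x == rowv m (tk m).+1)) else None].

Lemma Nk_gt0 m : 0 < Nk m. Proof. rewrite /Nk; lia. Qed.

Lemma col_idx m a b : a < Nk m -> b < Nk m ->
  { j : 'I_(NN m).+1 | (j : nat) %/ Nk m = a /\ (j : nat) %% Nk m = b }.
Proof.
move=> ha hb.
have hj : a * Nk m + b < (NN m).+1.
  rewrite /NN; have : a * Nk m <= (Nk m).-1 * Nk m by rewrite leq_mul2r; lia.
  move: (Nk_gt0 m) ha hb; move: (Nk m) => N; nia.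
exists (Ordinal hj) => /=; split.
  by rewrite divnMDl ?Nk_gt0 // divn_small // addn0.
by rewrite modnMDl modn_small.
Qed.

Lemma rowv_at m u (j : 'I_(NN m).+1) :
  tnth (rowv m u) j = ((u == (j : nat) %/ Nk m) || (u == (j : nat) %% Nk m)) && ~~ Eg m (j %/ Nk m) (j %% Nk m).
Proof. by rewrite tnth_mktuple. Qed.

Lemma rowv_inj m u v : u < Nk m -> v < Nk m -> rowv m u = rowv m v -> u = v.
Proof.
move=> hu hv e; have [j [j1 j2]] := col_idx hu hu.
have := congr1 (fun t => tnth t j) e; rewrite !rowv_at j1 j2 Eg_irr eqxx /=.
by rewrite orbb andbT => /esym/eqP.
Qed.

Lemma rowv_ind m u v : Eg m u v -> forall j, ~~ (tnth (rowv m u) j && tnth (rowv m v) j).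
Proof.
move=> e j; rewrite !rowv_at; move: (j %/ Nk m) (j %% Nk m) => a b.
move: e; rewrite /Eg /inC /Lk; lia.
Qed.

Lemma rowv_nz m v : v < Nk m -> rowv m v <> z0 _.
Proof.
move=> hv e; have [j [j1 j2]] := col_idx hv hv.
have := congr1 (fun t => tnth t j) e; rewrite rowv_at tnth_mktuple j1 j2 Eg_irr eqxx.
by [].
Qed.

Lemma hm_z0 m : hm m (z0 _) = None.
Proof.
rewrite /hm ffunE; case: existsP => // [[v /eqP e]].
by have := rowv_nz (ltn_ord v); rewrite e.
Qed.

Lemma hm_viol m : ~ pres m (hm m).
Proof.
move=> hp.
have ht : tk m < Nk m by rewrite /tk /Nk; lia.
have ht1 : (tk m).+1 < Nk m by rewrite /tk /Nk; lia.
have := hp (fun v => rowv m v) (fun u v e => rowv_ind e) _ (Ordinal ht) (Ordinal ht1).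
rewrite /= /hm !ffunE.
have ex w : w < Nk m -> [exists v : 'I_(Nk m), rowv m w == rowv m v].
  by move=> hw; apply/existsP; exists (Ordinal hw).
rewrite !ex // !eqxx /= orbT.
have -> : Eg m (tk m) (tk m).+1 by rewrite /Eg /tk /Lk; lia.
move=> H; suff : ~~ true by []; apply: H => // v.
by rewrite ffunE ex.
Qed.

Lemma hm_pres m k : k != m -> pres k (hm m).
Proof.
move=> nkm X hX hd u v e; apply/negP => /andP [hu hv].
have hex w : [exists y : 'I_(Nk m), X w == rowv m y].
  by move: (hd w); rewrite /hm ffunE; case: existsP => // [[v' hv']] _; apply/existsP; exists v'.
pose psi (w : 'I_(Nk k)) : nat := if [pick y : 'I_(Nk m) | X w == rowv m y] is Some y then (y : nat) else 0.
have psiP w : psi w < Nk m /\ X w = rowv m (psi w).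
  rewrite /psi; case: pickP => [y /eqP ->|h]; first by split.
  by case/existsP: (hex w) => v' hv'; have := h v'; rewrite hv'.
pose p (w : nat) := if insub w is Some w' then psi w' else 0.
have pE (w : 'I_(Nk k)) : p w = psi w by rewrite /p valK.
have hom : ghom k m p.
  split.
    move=> w hw; have -> : w = Ordinal hw by [].
    by rewrite pE; case: (psiP (Ordinal hw)).
  move=> a b ha hb eab.
  have -> : a = Ordinal ha by []. have -> : b = Ordinal hb by [].
  rewrite !pE.
  have [pa Xa] := psiP (Ordinal ha); have [pb Xb] := psiP (Ordinal hb).
  have [j [j1 j2]] := col_idx pa pb.
  have := hX (Ordinal ha) (Ordinal hb) eab j.
  rewrite Xa Xb !rowv_at j1 j2 eqxx /=.
  by rewrite eqxx orbT; case: (Eg m _ _).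
have ht : forall w : 'I_(Nk k), odflt false (hm m (X w)) ->
     (p w == tk m) || (p w == (tk m).+1).
  move=> w; rewrite pE; have [pw Xw] := psiP w.
  have ht : tk m < Nk m by rewrite /tk /Nk; lia.
  have ht1 : (tk m).+1 < Nk m by rewrite /tk /Nk; lia.
  rewrite /hm ffunE; case: ifP => //= _ /orP [] /eqP; rewrite Xw.
    by move=> /(rowv_inj pw ht) ->; rewrite eqxx.
  by move=> /(rowv_inj pw ht1) ->; rewrite eqxx orbT.
have := ht _ hu; have := ht _ hv.
case: (ltngtP k m) => [lt|lt|eq]; last by rewrite eq eqxx in nkm.
  by move=> h1 h2; apply: (hom_small lt hom (ltn_ord u) (ltn_ord v) e h2 h1).
by move=> _ _; apply: (hom_big lt hom).
Qed.

Lemma XS_inj (D : Family) (hT : forall n (f : PF n.+1), f \in D n -> in_T02 f) S S' :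
  XS D S = XS D S' -> S = S'.
Proof.
have key T T' m : T m = true -> T' m = false -> XS D T <> XS D T'.
  move=> h1 h2 e.
  have h : hm m \in XS D T (NN m).
    apply/XSP; right; split; first exact: hm_z0.
    move=> k hk; apply: hm_pres; apply/eqP => ekm; by rewrite ekm h1 in hk.
  rewrite e in h; case/XSP: h => [[d hd hr]|[_ hp]].
    by apply: (hm_viol (m := m)); apply: pres_restr hr _; apply: pres_T02; exact: hT.
  exact: hm_viol (hp m h2).
move=> e; apply: functional_extensionality => m.
case E1: (S m); case E2: (S' m) => //.
  by case: (key _ _ _ E1 E2 e).
by case: (key _ _ _ E2 E1 (esym e)).
Qed.

Definition enc (X : Family) : nat -> bool := fun p =>
  if @unpickle (prod nat nat) p is Some (a, b) then pickle (X a) == b else false.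

Lemma enc_inj (X Y : Family) : enc X = enc Y -> X = Y.
Proof.
move=> e; apply: functional_extensionality_dep => a.
have := congr1 (fun t => t (pickle (a, pickle (X a)))) e.
rewrite /enc pickleK eqxx => /esym/eqP/esym; exact: (pcan_inj (@pickleK _)).
Qed.

Lemma csb (A B : Type) (P : A -> Prop) (f : A -> B) (g : B -> A) :
  (forall x y, f x = f y -> x = y) -> injective g -> (forall b, P (g b)) ->
  exists F : B -> A, injective F /\ (forall b, P (F b)) /\ (forall x, P x -> exists b, F b = x).
Proof.
move=> fi gi gP.
pose h b := f (g b).
pose Z b := exists n b0, (~ exists x, P x /\ f x = b0) /\ b = iter n h b0.
pose finv b := match excluded_middle_informative (exists x, P x /\ f x = b) with
  | left H => proj1_sig (constructive_indefinite_description _ H) | right _ => g b end.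
have finvP b : (exists x, P x /\ f x = b) -> P (finv b) /\ f (finv b) = b.
  rewrite /finv; case: excluded_middle_informative => // H _.
  exact: (proj2_sig (constructive_indefinite_description _ H)).
have nZ b : ~ Z b -> exists x, P x /\ f x = b.
  move=> nz; apply: NNPP => ne; apply: nz; by exists 0, b.
pose F b := if excluded_middle_informative (Z b) then g b else finv b.
have Fz b : Z b -> F b = g b by rewrite /F; case: excluded_middle_informative.
have Fn b : ~ Z b -> F b = finv b by rewrite /F; case: excluded_middle_informative.
have Zs b : Z b -> Z (h b).
  by case=> n [b0 [hb0 eb]]; exists n.+1, b0; split => //; rewrite iterS eb.
exists F; split; [|split].
- move=> b1 b2.
  case: (classic (Z b1)) => z1; case: (classic (Z b2)) => z2.
  + rewrite !Fz //; exact: gi.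
  + rewrite Fz // Fn // => e; exfalso; apply z2.
    by rewrite -(finvP _ (nZ _ z2)).2 -e; apply: Zs.
  + rewrite Fn // Fz // => e; exfalso; apply z1.
    by rewrite -(finvP _ (nZ _ z1)).2 e; apply: Zs.
  + rewrite !Fn // => e.
    by rewrite -(finvP _ (nZ _ z1)).2 -(finvP _ (nZ _ z2)).2 e.
- move=> b; case: (classic (Z b)) => z; first by rewrite Fz.
  rewrite Fn //; exact: (finvP _ (nZ _ z)).1.
- move=> x px.
  case: (classic (Z (f x))) => z.
    case: z => [[|n] [b0 [hb0 e]]].
      by exfalso; apply: hb0; exists x.
    exists (iter n h b0); rewrite Fz; last by exists n, b0.
    by apply: fi; rewrite e iterS.
  exists (f x); rewrite Fn //.
  by apply: fi; rewrite (finvP _ (nZ _ z)).2.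
Qed.

Theorem mainTheorem4 (D : Family) :
  total_clone D ->
  (forall n (f : PF n.+1), f \in D n -> in_T02 f) ->
  card_continuum (Istr D).
Proof.
move=> hD hT.
have [F [Fi [FP Fs]]] := csb (P := Istr D) enc_inj (XS_inj hT) (fun s => XS_Istr s hD hT).
by exists F.
Qed.
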